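(* Let $n\ge2$ and let $(X,\delta)$ be the diversity on an $n$-point set $X$ with $\delta(A)=|A|-1$ for all nonempty $A\subseteq X$ (and $\delta(\emptyset)=0$). Then every embedding of $(X,\delta)$ into $\ell_1^k$ has distortion at least $(n-1)/k$.
   Context: The $\ell_1^k$ diversity is $(\mathbb{R}^k,\delta_1)$ with $\delta_1(A)=\sum_{i=1}^k\max\{|a_i-b_i|:a,b\in A\}$. A map $\phi:X_1\to X_2$ between diversities $(X_1,\delta_1)$, $(X_2,\delta_2)$ has distortion $c\ge1$ if there are $c_1,c_2>0$ with $c=c_1c_2$ and $\frac1{c_1}\delta_1(A)\le\delta_2(\phi(A))\le c_2\delta_1(A)$ for all finite $A\subseteq X_1$. *)

(* Defs.v *)
From mathcomp Require Import all_boot all_order all_algebra.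
From mathcomp Require Import reals.
Set Implicit Arguments. Unset Strict Implicit. Unset Printing Implicit Defensive.
Import Order.TTheory GRing.Theory Num.Theory.
Local Open Scope ring_scope.

(* A finite subset A of R^k is given by a sequence listing its elements;
   the value depends only on the set of elements. Empty max is 0. *)
Definition l1_div (R : realType) (k : nat) (A : seq 'rV[R]_k) : R :=
  \sum_(i < k) \big[Num.max/0]_(a <- A) \big[Num.max/0]_(b <- A) `|a 0 i - b 0 i|.

Definition card_div (R : realType) (n : nat) (A : {set 'I_n}) : R :=
  (#|A|.-1)%:R.

Definition has_distortion (R : realType) (n k : nat) (phi : 'I_n -> 'rV[R]_k)
  (c : R) : Prop :=
  1 <= c /\
  exists c1 c2 : R, 0 < c1 /\ 0 < c2 /\ c = c1 * c2 /\
    forall A : {set 'I_n},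
      card_div R A / c1 <= l1_div [seq phi x | x in A] /\
      l1_div [seq phi x | x in A] <= c2 * card_div R A.

(* Main.v *)
Require Import Defs.
From mathcomp Require Import all_boot all_order all_algebra.
From mathcomp Require Import reals.
Import Order.TTheory GRing.Theory Num.Theory.
Local Open Scope ring_scope.

Lemma bmax_le (R : realType) (T : eqType) (s : seq T) (F : T -> R) (M : R) :
  0 <= M -> (forall a, a \in s -> F a <= M) -> \big[Num.max/0]_(a <- s) F a <= M.
Proof.
move=> M0; elim: s => [|x s IH] H; first by rewrite big_nil.
rewrite big_cons ge_max H ?mem_head //= IH // => a As; apply: H.
by rewrite in_cons As orbT.
Qed.

Lemma le_bmax (R : realType) (T : eqType) (s : seq T) (F : T -> R) z :
  z \in s -> F z <= \big[Num.max/0]_(a <- s) F a.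
Proof.
elim: s => [|x s IH] //; rewrite in_cons big_cons le_max.
by case/orP=> [/eqP->|/IH->]; rewrite ?lexx ?orbT.
Qed.

Lemma bmax_ge0 (R : realType) (T : eqType) (s : seq T) (F : T -> R) :
  0 <= \big[Num.max/0]_(a <- s) F a.
Proof. by elim: s => [|x s IH]; rewrite ?big_nil // big_cons le_max IH orbT. Qed.

Theorem proposition15 (R : realType) (n k : nat) (hn : (2 <= n)%N)
  (phi : 'I_n -> 'rV[R]_k) (c : R) :
  has_distortion phi c -> (n.-1)%:R / k%:R <= c.
Proof.
case: k phi => [|k] phi [c1' [c1 [c2 [c1p [c2p [-> H]]]]]].
  by rewrite invr0 mulr0 mulr_ge0 ?ltW.
have pair : forall (i : 'I_k.+1) x y, `|phi x 0 i - phi y 0 i| <= c2.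
  move=> i x y.
  have [_ H2] := H [set x; y].
  have Hc : card_div R [set x; y] <= 1.
    by rewrite /card_div cards2; case: (x != y).
  apply: le_trans (le_trans H2 _); last by rewrite -[X in _ <= X]mulr1 ler_wpM2l // ltW.
  rewrite /l1_div (bigD1 i) //= -[X in X <= _]addr0 lerD //; last first.
    by apply: sumr_ge0 => j _; apply: bmax_ge0.
  apply: le_trans (@le_bmax _ _ _ _ (phi x) _); last by apply: map_f; rewrite mem_enum !inE eqxx.
  apply: le_trans (@le_bmax _ _ _ _ (phi y) _); first by [].
  by apply: map_f; rewrite mem_enum !inE eqxx orbT.
have [H1 _] := H [set: 'I_n].
have Hup : l1_div [seq phi x | x in [set: 'I_n]] <= k.+1%:R * c2.
  have -> : k.+1%:R * c2 = \sum_(i < k.+1) c2 by rewrite sumr_const card_ord mulr_natl.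
  apply: ler_sum => i _.
  apply: bmax_le; first exact: ltW.
  move=> a /imageP [x _ ->]; apply: bmax_le; first exact: ltW.
  by move=> b /imageP [y _ ->]; apply: pair.
have := le_trans H1 Hup.
rewrite /card_div cardsT card_ord ler_pdivrMr // => Hn.
rewrite ler_pdivrMr ?ltr0Sn //.
apply: (le_trans Hn); rewrite mulrC mulrA -!mulrA [k.+1%:R * _]mulrC; exact: lexx.
Qed.
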